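(* Let $k$ be sufficiently large and $m/n\ge195\cdot2^k\ln^2k/k$. Let $\mathcal M$ be any outcome of the greedy mist construction applied to $\Phi=\Phi_k(n,m)$. Then with high probability, for every $\tau\in\{0,1\}^n$ we have $|\mathcal M\cap\mathcal D_\tau(0,10)|\le k$.
   Context: $\Phi=\Phi_k(n,m)$ is a uniformly random $k$-CNF with $m$ clauses over $x_1,\dots,x_n$. $\rho=2^{-k}m/n$, $\kappa=\ln k/k$. $\mathcal U_\Phi(\sigma)$ is the number of clauses unsatisfied by $\sigma$, $T(\Phi)=\{\tau:\mathcal U_\Phi(\tau)\le n\rho/10\}$. $\mathrm{dist}$ is Hamming distance and $\mathcal D_\sigma(r_1,r_2)=\{\tau\in\{0,1\}^n:\lfloor r_1\kappa n\rfloor\le\mathrm{dist}(\sigma,\tau)\le\lfloor r_2\kappa n\rfloor\}$. Greedy mist construction: start with $\mathcal M=\emptyset$; while $T(\Phi)\setminus\bigcup_{\mu\in\mathcal M}\mathcal D_\mu(0,2)\ne\emptyset$, add an arbitrary element of this set to $\mathcal M$. *)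

(* Defs.v *)
From mathcomp Require Import all_boot.
From Stdlib Require Import Reals ZArith.

Set Implicit Arguments.
Unset Strict Implicit.
Unset Printing Implicit Defensive.

Definition assignment (n : nat) := {ffun 'I_n -> bool}.

(* A literal is a pair (i, b): it is the positive literal x_i if b = true and
   the negative literal ~x_i if b = false.  It is true under sigma iff sigma i = b. *)
Definition literal (n : nat) := ('I_n * bool)%type.

(* A k-CNF with m clauses over x_1..x_n: each clause is an ordered k-tuple of
   literals. Phi_k(n,m) is the uniform distribution on this finite type. *)
Definition kcnf (k n m : nat) := {ffun 'I_m -> {ffun 'I_k -> literal n}}.

Definition lit_true n (sigma : assignment n) (l : literal n) : bool :=
  sigma l.1 == l.2.

Definition unsat k n m (Phi : kcnf k n m) (sigma : assignment n) : nat :=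
  #|[set j : 'I_m | [forall l : 'I_k, ~~ lit_true sigma (Phi j l)]]|.

Definition rho (k n m : nat) : R := ((/ 2) ^ k * INR m / INR n)%R.
Definition kappa (k : nat) : R := (ln (INR k) / INR k)%R.

Definition inT k n m (Phi : kcnf k n m) (tau : assignment n) : Prop :=
  (INR (unsat Phi tau) <= INR n * rho k n m / 10)%R.

Definition dist n (sigma tau : assignment n) : nat :=
  #|[set i : 'I_n | sigma i != tau i]|.

Definition inD (k n : nat) (sigma tau : assignment n) (r1 r2 : R) : bool :=
  (Int_part (r1 * kappa k * INR n) <=? Z.of_nat (dist sigma tau))%Z &&
  (Z.of_nat (dist sigma tau) <=? Int_part (r2 * kappa k * INR n))%Z.

(* s = [mu_0; ...; mu_{t-1}] is a possible run of the greedy mist construction: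
   each mu_i was, at the time it was added, an element of
   T(Phi) \ U_{j<i} D_{mu_j}(0,2), and at the end the loop condition fails,
   i.e. T(Phi) is covered by U_{mu in s} D_mu(0,2).  The outcome is M = {mu in s}. *)
Definition greedy_mist_run k n m (Phi : kcnf k n m) (s : seq (assignment n)) : Prop :=
  (forall i, i < size s ->
     inT Phi (nth (nth [ffun=> false] s 0) s i) /\
     forall j, j < i ->
       ~~ inD k (nth (nth [ffun=> false] s 0) s j) (nth (nth [ffun=> false] s 0) s i) 0 2)
  /\
  (forall tau, inT Phi tau -> exists2 mu, mu \in s & inD k mu tau 0 2).

(* Main.v *)
Require Import Defs.
From mathcomp Require Import all_boot.
From Stdlib Require Import Reals ZArith.
From Stdlib Require Import Lia Lra.
From mathcomp Require Import zify.

Set Implicit Arguments.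
Unset Strict Implicit.
Unset Printing Implicit Defensive.


Lemma sum_ffun_prod (I J : finType) (w : I -> J -> nat) :
  \sum_(f : {ffun I -> J}) \prod_i w i (f i) = \prod_i \sum_j w i j.
Proof. by rewrite bigA_distr_bigA. Qed.

Lemma card_forall (I J : finType) (P : pred J) :
  #|[set c : {ffun I -> J} | [forall l, P (c l)]]| = expn #|P| #|I|.
Proof.
rewrite -card_ffun_on; apply: eq_card => c; rewrite inE.
apply/forallP/ffun_onP => H x; have := H x; by [].
Qed.

Lemma card_lits2 n (s t : assignment n) :
  #|[pred l : literal n | ~~ lit_true s l && ~~ lit_true t l]| =
  #|[set v | s v == t v]|.
Proof.
rewrite -!sum1_card big_mkcond /=.
transitivity (\sum_(v : 'I_n) \sum_(b : bool) (if (~~ (s v == b)) && ~~ (t v == b) then 1 else 0)).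
  by rewrite pair_bigA; apply: eq_bigr => -[v b] _.
rewrite [RHS]big_mkcond; apply: eq_bigr => v _; rewrite big_bool inE.
by case: (s v); case: (t v).
Qed.

Lemma agree_dist n (s t : assignment n) :
  #|[set v | s v == t v]| + Defs.dist s t = n.
Proof.
have := cardC [set v | s v == t v]; rewrite card_ord => E; rewrite -[in RHS]E; congr (_ + _).
by apply: eq_card => v; rewrite !inE.
Qed.

Lemma pointwise_ie (I : finType) (b : I -> bool) :
  \sum_i (b i : nat) <=
  ([exists i, b i] : nat) + \sum_i \sum_(j | j != i) ((b i && b j) : nat).
Proof.
set A := [set i | b i].
have E1 : \sum_i (b i : nat) = #|A|.
  by rewrite -sum1_card [RHS]big_mkcond; apply: eq_bigr => i _; rewrite inE; case: (b i).
have E2 : \sum_i \sum_(j | j != i) ((b i && b j) : nat) = \sum_(i in A) #|A :\ i|.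
  rewrite [RHS]big_mkcond; apply: eq_bigr => i _; rewrite inE.
  case: (b i) => /=; last by rewrite big1.
  rewrite -sum1_card [RHS]big_mkcond [LHS]big_mkcond; apply: eq_bigr => j _.
  by rewrite !inE andbC; case: (j == i); case: (b j).
have E3 : \sum_(i in A) #|A :\ i| = #|A| * (#|A| - 1).
  rewrite (eq_bigr (fun _ => #|A| - 1)); first by rewrite sum_nat_const.
  by move=> i iA; rewrite (cardsD1 i A) iA /= add1n subn1.
have E4 : ([exists i, b i] : nat) = (0 < #|A|).
  rewrite card_gt0; case: existsP => [[i bi]|nb].
    case: eqP => // A0; have : i \in A by rewrite inE.
    by rewrite A0 inE.
  case: eqP => //= /eqP; rewrite -card_gt0 => /card_gt0P [i]; rewrite inE => bi.
  by case: nb; exists i.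
rewrite E1 E2 E3 E4.
case: #|A| => // a; rewrite ltn0Sn add1n subSS subn0 ltnS; by rewrite mulSn leq_addr.
Qed.

Lemma card_sum (C : finType) (A : {set C}) : #|A| = \sum_c ((c \in A) : nat).
Proof. by rewrite -sum1_card big_mkcond; apply: eq_bigr => c _; case: (c \in A). Qed.

Lemma card_ie (I C : finType) (U : I -> {set C}) :
  \sum_i #|U i| <= #|[set c | [exists i, c \in U i]]| + \sum_i \sum_(j | j != i) #|U i :&: U j|.
Proof.
under eq_bigr do rewrite card_sum.
rewrite exchange_big /= card_sum.
under [X in _ <= _ + X]eq_bigr do under eq_bigr do rewrite card_sum.
under [X in _ <= _ + X]eq_bigr do rewrite exchange_big /=.
rewrite [X in _ <= _ + X]exchange_big /= -big_split /=.
apply: leq_sum => c _; rewrite inE.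
apply: leq_trans (pointwise_ie (fun i => c \in U i)) _.
by apply: leq_add => //; apply: leq_sum => i _; apply: leq_sum => j _; rewrite inE.
Qed.

Lemma expn_mono m n e : m <= n -> expn m e <= expn n e.
Proof. by move=> h; elim: e => // e IH; rewrite !expnS leq_mul. Qed.

Definition Uset k n (s : assignment n) : {set {ffun 'I_k -> literal n}} :=
  [set c : {ffun 'I_k -> literal n} | [forall l, ~~ lit_true s (c l)]].

Lemma card_UI k n (s t : assignment n) :
  #|Uset k s :&: Uset k t| = expn #|[set v | s v == t v]| k.
Proof.
rewrite -card_lits2 -[in RHS](card_ord k) -(@card_forall 'I_k _ [pred l : literal n | ~~ lit_true s l && ~~ lit_true t l]); apply: eq_card => c.
rewrite !inE; apply/andP/forallP.
  by move=> [/forallP h1 /forallP h2] l; rewrite inE h1 h2.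
by move=> h; split; apply/forallP => l; have := h l; rewrite inE => /andP[].
Qed.

Lemma card_U k n (s : assignment n) : #|Uset k s| = expn n k.
Proof.
rewrite -[Uset k s]setIid card_UI; congr expn.
have -> : [set v | s v == s v] = setT by apply/setP => v; rewrite !inE eqxx.
by rewrite cardsT card_ord.
Qed.

Lemma unsatE k n m (Phi : kcnf k n m) s :
  unsat Phi s = #|[set j | Phi j \in Uset k s]|.
Proof. by apply: eq_card => j; rewrite !inE. Qed.

Lemma dist_sym n (s t : assignment n) : Defs.dist s t = Defs.dist t s.
Proof. by apply: eq_card => v; rewrite !inE eq_sym. Qed.

Definition Gset k n K (mu : 'I_K -> assignment n) : {set {ffun 'I_k -> literal n}} :=
  [set c : {ffun 'I_k -> literal n} | [exists i, c \in Uset k (mu i)]].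

Lemma G_lower k n K d (mu : 'I_K -> assignment n) :
  (forall i j, i != j -> d < Defs.dist (mu i) (mu j)) ->
  K * expn n k <= #|Gset k mu| + K * (K - 1) * expn (n - d.+1) k.
Proof.
move=> far.
have := card_ie (fun i => Uset k (mu i)).
under eq_bigr do rewrite card_U.
rewrite sum_nat_const card_ord => h; apply: leq_trans h _.
rewrite leq_add2l -mulnA -[K in K * _](card_ord K) -sum_nat_const.
apply: leq_sum => i _.
apply: (@leq_trans (\sum_(j | j != i) expn (n - d.+1) k)).
  apply: leq_sum => j ji.
  rewrite card_UI; apply: expn_mono.
  have := agree_dist (mu i) (mu j); have := far i j.
  rewrite eq_sym ji /= => /(_ isT) h1 h2; lia.
have -> : \sum_(j | j != i) expn (n - d.+1) k = \sum_(j in predC1 i) expn (n - d.+1) k.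
  by apply: eq_bigl.
by rewrite sum_nat_const cardC1 card_ord subn1.
Qed.

Lemma F_count (C : finType) M (F : {set {ffun 'I_M -> C}}) (G : {set C}) Z :
  (forall Phi, Phi \in F -> #|[set j | Phi j \in G]| <= Z) ->
  #|F| * expn 2 M <= expn 2 Z * expn (2 * #|C| - #|G|) M.
Proof.
move=> hF.
pose w c := if c \in G then 1 else 2.
have Sw : \sum_(c : C) w c = 2 * #|C| - #|G|.
  have h1 : \sum_(c : C) w c = \sum_(c : C) 1 + \sum_(c : C) ((c \notin G) : nat).
    transitivity (\sum_(c : C) (1 + ((c \notin G) : nat))); last by rewrite big_split.
    apply: eq_bigr => c _; rewrite /w. by case: (c \in G).
  have h2 : \sum_(c : C) ((c \notin G) : nat) = #|~: G|.
    by rewrite card_sum; apply: eq_bigr => c _; rewrite inE.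
  have h3 := cardsC G.
  have h4 : \sum_(c : C) 1 = #|C| by rewrite sum1_card.
  rewrite h1 h2 h4; lia.
have Sall : \sum_(Phi : {ffun 'I_M -> C}) \prod_j w (Phi j) = expn (2 * #|C| - #|G|) M.
  rewrite (sum_ffun_prod (fun _ => w)) Sw.
  by rewrite prod_nat_const card_ord.
have Pphi : forall Phi : {ffun 'I_M -> C},
    expn 2 M = expn 2 #|[set j | Phi j \in G]| * \prod_j w (Phi j).
  move=> Phi.
  have -> : \prod_j w (Phi j) = \prod_(j in [set j | Phi j \notin G]) 2.
    rewrite [RHS]big_mkcond; apply: eq_bigr => j _; rewrite /w inE.
    by case: (Phi j \in G).
  rewrite prod_nat_const -expnD; congr expn.
  rewrite -[LHS](card_ord M) -(cardsC [set j | Phi j \in G]); congr addn.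
  by apply: eq_card => j; rewrite !inE.
rewrite -Sall -sum_nat_const big_distrr /=.
apply: (@leq_trans (\sum_(Phi in F) expn 2 Z * \prod_j w (Phi j))).
  apply: leq_sum => Phi PhiF; rewrite (Pphi Phi) leq_mul2r leq_pexp2l ?orbT //.
  exact: hF.
by rewrite [X in _ <= X](bigID (fun Phi => Phi \in F)) /= leq_addr.
Qed.

Lemma ball_count n k r (tau : assignment n) : 0 < k ->
  #|[set s : assignment n | Defs.dist tau s <= r]| * expn k (n - r) <= expn k.+1 n.
Proof.
move=> k0.
pose w (v : 'I_n) (b : bool) := if b == tau v then k else 1.
have S : \sum_(s : assignment n) \prod_v w v (s v) = expn k.+1 n.
  rewrite sum_ffun_prod.
  rewrite (eq_bigr (fun _ => k.+1)); first by rewrite prod_nat_const card_ord.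
  move=> v _; rewrite big_bool /w; case: (tau v) => /=; [exact: addn1 | exact: add1n].
have P : forall s : assignment n,
   \prod_v w v (s v) = expn k #|[set v | tau v == s v]|.
  move=> s; rewrite -prod_nat_const [RHS]big_mkcond; apply: eq_bigr => v _.
  by rewrite /w inE eq_sym; case: (s v == tau v).
rewrite -S -sum_nat_const.
apply: (@leq_trans (\sum_(s in [set s : assignment n | Defs.dist tau s <= r]) \prod_v w v (s v))).
  apply: leq_sum => s; rewrite inE => hs; rewrite P leq_pexp2l //.
  have := agree_dist tau s; lia.
by rewrite [X in _ <= X](bigID (fun s => s \in [set s : assignment n | Defs.dist tau s <= r])) /= leq_addr.
Qed.

Lemma exists_le_sum (I : finType) (b : I -> bool) : ([exists i, b i] : nat) <= \sum_i (b i : nat).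
Proof.
case: existsP => [[i bi]|] //=.
by rewrite (bigD1 i) //= bi.
Qed.

Definition goodT k n r d (tau : assignment n) (mu : {ffun 'I_k.+1 -> assignment n}) : bool :=
  [forall i, Defs.dist tau (mu i) <= r] &&
  [forall i, forall j, (i != j) ==> (d < Defs.dist (mu i) (mu j))].
Definition inTb k n M (Phi : kcnf k n M) s : bool := 10 * expn 2 k * unsat Phi s <= M.
Definition Fset k n M (mu : {ffun 'I_k.+1 -> assignment n}) : {set kcnf k n M} :=
  [set Phi | [forall i, inTb Phi (mu i)]].
Definition Bset k n M r d : {set kcnf k n M} :=
  [set Phi | [exists p : assignment n * {ffun 'I_k.+1 -> assignment n},
     goodT r d p.1 p.2 && (Phi \in Fset M p.2)]].

Lemma F_bound k n M r d (tau : assignment n) (mu : {ffun 'I_k.+1 -> assignment n}) :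
  0 < k -> k * k * expn (n - d.+1) k <= expn n k -> goodT r d tau mu ->
  #|Fset M mu| * (expn 2 M * expn k M) <=
  expn 2 (k.+1 * M %/ (10 * expn 2 k)) *
  expn (2 * k * #|{ffun 'I_k -> literal n}| - k.+1 * (k - 1) * expn n k) M.
Proof.
move=> k0 hnd /andP[_ /forallP far].
have hG := @G_lower k n k.+1 d mu.
have {}hG : k.+1 * expn n k <= #|Gset k mu| + k.+1 * k * expn (n - d.+1) k.
  rewrite subn1 /= in hG.
  apply: hG => i j ij; have := far i => /forallP /(_ j); by rewrite ij.
have hGC : #|Gset k mu| <= #|{ffun 'I_k -> literal n}| by apply: max_card.
have hE : (2 * #|{ffun 'I_k -> literal n}| - #|Gset k mu|) * k <=
   2 * k * #|{ffun 'I_k -> literal n}| - k.+1 * (k - 1) * expn n k.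
  set G := #|Gset k mu| in hG hGC *; set C := #|{ffun 'I_k -> literal n}| in hGC *.
  set A := expn n k in hG hnd *; set B := expn (n - d.+1) k in hG hnd *.
  nia.
rewrite mulnA.
have := @F_count _ M (Fset M mu) (Gset k mu) (k.+1 * M %/ (10 * expn 2 k)).
move=> h; apply: leq_trans (leq_mul (h _) (leqnn (expn k M))) _.
  move=> Phi; rewrite inE => /forallP hPhi.
  rewrite leq_divRL ?muln_gt0 ?expn_gt0 //.
  apply: (@leq_trans (10 * expn 2 k * \sum_i unsat Phi (mu i))).
    rewrite [X in _ <= X]mulnC leq_mul2r; apply/orP; right.
    rewrite card_sum.
    apply: (@leq_trans (\sum_j \sum_i ((Phi j \in Uset k (mu i)) : nat))).
      apply: leq_sum => j _; rewrite inE.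
      have := exists_le_sum (fun i => Phi j \in Uset k (mu i)).
      by rewrite /Gset in_set.
    rewrite exchange_big /=; apply: leq_sum => i _.
    by rewrite unsatE card_sum; apply: leq_sum => j _; rewrite inE.
  rewrite big_distrr /=.
  have -> : k.+1 * M = \sum_(i < k.+1) M by rewrite sum_nat_const card_ord.
  apply: leq_sum => i _.
  exact: hPhi.
by rewrite -mulnA -expnMn leq_mul2l expn_mono ?orbT.
Qed.


Lemma B_bound k n M r d D E :
  (forall tau mu, goodT r d tau mu -> #|@Fset k n M mu| * D <= E) ->
  #|Bset k n M r d| * D <=
  E * #|[set p : assignment n * {ffun 'I_k.+1 -> assignment n} | goodT r d p.1 p.2]|.
Proof.
move=> hF.
have h1 : #|Bset k n M r d| <=
   \sum_(p : assignment n * {ffun 'I_k.+1 -> assignment n} | goodT r d p.1 p.2) #|@Fset k n M p.2|.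
  rewrite card_sum.
  apply: (@leq_trans (\sum_(Phi : kcnf k n M) \sum_(p : assignment n * {ffun 'I_k.+1 -> assignment n})
        ((goodT r d p.1 p.2 && (Phi \in Fset M p.2)) : nat))).
    apply: leq_sum => Phi _; rewrite inE.
    by apply: exists_le_sum.
  rewrite exchange_big /= [X in _ <= X]big_mkcond /=; apply: leq_sum => p _.
  case: (goodT r d p.1 p.2) => /=; last by rewrite sum_nat_const muln0.
  by rewrite card_sum.
apply: (@leq_trans ((\sum_(p : assignment n * {ffun 'I_k.+1 -> assignment n} | goodT r d p.1 p.2) #|@Fset k n M p.2|) * D)).
  exact: leq_mul h1 (leqnn D).
rewrite big_distrl /= mulnC -sum_nat_const.
apply: (@leq_trans (\sum_(p : assignment n * {ffun 'I_k.+1 -> assignment n} | goodT r d p.1 p.2) E)).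
  by apply: leq_sum => p hp; apply: hF hp.
by apply/eq_leq; apply: eq_bigl => p; rewrite inE.
Qed.

Lemma good_count k n r d : 0 < k ->
  #|[set p : assignment n * {ffun 'I_k.+1 -> assignment n} | goodT r d p.1 p.2]| *
    expn k ((n - r) * k.+1) <= expn 2 n * expn k.+1 (n * k.+1).
Proof.
move=> k0.
have h1 : #|[set p : assignment n * {ffun 'I_k.+1 -> assignment n} | goodT r d p.1 p.2]| <=
   \sum_(tau : assignment n) #|[set mu : {ffun 'I_k.+1 -> assignment n} |
         [forall i, [pred s | Defs.dist tau s <= r] (mu i)]]|.
  apply: (@leq_trans (\sum_(tau : assignment n) \sum_(mu : {ffun 'I_k.+1 -> assignment n}) (goodT r d tau mu : nat))).
    by rewrite card_sum pair_bigA; apply/eq_leq/eq_bigr => -[tau mu] _; rewrite inE.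
  apply: leq_sum => tau _.
  rewrite card_sum; apply: leq_sum => mu _; rewrite !inE /goodT.
  by case: [forall i, _]; case: [forall i, _].
have h2 : forall tau : assignment n,
    #|[set mu : {ffun 'I_k.+1 -> assignment n} | [forall i, [pred s | Defs.dist tau s <= r] (mu i)]]|
      * expn k ((n - r) * k.+1) <= expn k.+1 (n * k.+1).
  move=> tau; rewrite card_forall card_ord !expnM -expnMn; apply: expn_mono.
  have := ball_count r tau k0.
  have -> : #|[set s : assignment n | Defs.dist tau s <= r]| = #|[pred s | Defs.dist tau s <= r]|.
    by apply: eq_card => s; rewrite !inE.
  by [].
apply: (@leq_trans ((\sum_(tau : assignment n) #|[set mu : {ffun 'I_k.+1 -> assignment n} |
         [forall i, [pred s | Defs.dist tau s <= r] (mu i)]]|) * expn k ((n - r) * k.+1))).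
  exact: leq_mul h1 (leqnn _).
rewrite big_distrl /=.
apply: (@leq_trans (\sum_(tau : assignment n) expn k.+1 (n * k.+1))).
  by apply: leq_sum => tau _; apply: h2.
by rewrite sum_nat_const card_ffun card_bool card_ord.
Qed.

Lemma nat_main k n M r d : 0 < k -> k * k * expn (n - d.+1) k <= expn n k ->
  #|Bset k n M r d| * (expn 2 M * expn k M) * expn k ((n - r) * k.+1) <=
  expn 2 (k.+1 * M %/ (10 * expn 2 k)) *
  expn (2 * k * #|{ffun 'I_k -> literal n}| - k.+1 * (k - 1) * expn n k) M *
  (expn 2 n * expn k.+1 (n * k.+1)).
Proof.
move=> k0 hnd.
have := @B_bound k n M r d (expn 2 M * expn k M)
  (expn 2 (k.+1 * M %/ (10 * expn 2 k)) *
   expn (2 * k * #|{ffun 'I_k -> literal n}| - k.+1 * (k - 1) * expn n k) M).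
move=> /(_ (fun tau mu hg => F_bound M k0 hnd hg)) hB.
apply: leq_trans (leq_mul hB (leqnn _)) _.
by rewrite -mulnA leq_mul2l good_count ?orbT.
Qed.

Lemma not_B k n M r d (Phi : kcnf k n M) (s : seq (assignment n)) tau :
  (forall mu, inT Phi mu -> inTb Phi mu) ->
  (forall a b : assignment n, inD k a b 0 10 -> Defs.dist a b <= r) ->
  (forall a b : assignment n, ~~ inD k a b 0 2 -> d < Defs.dist a b) ->
  Phi \notin Bset k n M r d -> greedy_mist_run Phi s ->
  #|[set mu | (mu \in s) && inD k tau mu 0 10]| <= k.
Proof.
move=> hT h10 h2 nB [run _].
rewrite leqNgt; apply/negP => hk.
set S := [set mu | (mu \in s) && inD k tau mu 0 10] in hk.
set e := enum S.
have se : size e = #|S| by rewrite cardE.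
pose mu := [ffun i : 'I_k.+1 => nth tau e i].
have muS : forall i, mu i \in S.
  move=> i; rewrite ffunE; have : nth tau e i \in e by apply: mem_nth; rewrite se; exact: leq_trans (ltn_ord i) hk.
  by rewrite mem_enum.
pose x0 := nth [ffun=> false] s 0.
have inS : forall x, x \in s -> inT Phi x.
  move=> x xs; have := run (index x s); rewrite index_mem => /(_ xs) [hx _].
  by rewrite nth_index in hx.
have farS : forall x y, x \in s -> y \in s -> x != y -> d < Defs.dist x y.
  have key : forall x y, x \in s -> y \in s -> index x s < index y s -> d < Defs.dist x y.
    move=> x y xs ys ixy; have := run (index y s); rewrite index_mem => /(_ ys) [_ /(_ _ ixy)].
    by rewrite !nth_index //; apply: h2.
  move=> x y xs ys xy.
  case: (ltngtP (index x s) (index y s)) => hxy.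
  - exact: key.
  - rewrite dist_sym; exact: key.
  - by move: xy; rewrite -(nth_index x0 xs) hxy nth_index // eqxx.
case/negP: nB; rewrite inE; apply/existsP; exists (tau, mu) => /=.
apply/andP; split; last first.
  rewrite inE; apply/forallP => i; apply: hT; apply: inS.
  by have := muS i; rewrite inE => /andP[].
apply/andP; split.
  apply/forallP => i; apply: h10.
  by have := muS i; rewrite inE => /andP[].
apply/forallP => i; apply/forallP => j; apply/implyP => ij.
have := muS i; have := muS j; rewrite !inE => /andP[sj _] /andP[si _].
apply: farS => //.
rewrite !ffunE; apply/eqP => /eqP; rewrite nth_uniq ?enum_uniq ?se.
- move=> hij; move: ij; have -> : i = j by apply: ord_inj; apply/eqP.
  by rewrite eqxx.
- exact: leq_trans (ltn_ord i) hk.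
- exact: leq_trans (ltn_ord j) hk.
- by [].
Qed.

Lemma INR_expn a b : INR (expn a b) = (INR a ^ b)%R.
Proof.
elim: b => [|b IH]; first by rewrite expn0.
by rewrite expnS -multE mult_INR IH.
Qed.

Lemma INR_muln a b : INR (a * b) = (INR a * INR b)%R.
Proof. by rewrite -multE mult_INR. Qed.

Lemma INR_leq a b : a <= b -> (INR a <= INR b)%R.
Proof. by move=> /leP; apply: le_INR. Qed.

Lemma exp_pow x n : (exp x ^ n = exp (INR n * x))%R.
Proof.
elim: n => [|n IH]; first by rewrite /= Rmult_0_l exp_0.
by rewrite -tech_pow_Rmult IH S_INR -exp_plus; congr exp; ring.
Qed.

Lemma ip_nonneg x : (0 <= x)%R -> (0 <= Int_part x)%Z.
Proof.
move=> hx; have [h1 h2] := base_Int_part x.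
have : (-1 < IZR (Int_part x))%R by lra.
move=> /lt_IZR; lia.
Qed.

Lemma ip_INR x : (0 <= x)%R -> INR (Z.to_nat (Int_part x)) = IZR (Int_part x).
Proof. by move=> hx; rewrite INR_IZR_INZ Z2Nat.id //; apply: ip_nonneg. Qed.

Lemma ip_le x : (0 <= x)%R -> (INR (Z.to_nat (Int_part x)) <= x)%R.
Proof. by move=> hx; rewrite ip_INR //; have [] := base_Int_part x. Qed.

Lemma ip_gt x : (0 <= x)%R -> (x < INR (Z.to_nat (Int_part x)) + 1)%R.
Proof. by move=> hx; rewrite ip_INR //; have [] := base_Int_part x; lra. Qed.

Lemma inD10 k n (a b : assignment n) : (0 <= kappa k * INR n)%R ->
  inD k a b 0 10 -> Defs.dist a b <= Z.to_nat (Int_part (10 * kappa k * INR n)).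
Proof.
move=> hk /andP [_ /Z.leb_le h].
have : (0 <= Int_part (10 * kappa k * INR n))%Z by apply: ip_nonneg; lra.
lia.
Qed.

Lemma inD2 k n (a b : assignment n) : (0 <= kappa k * INR n)%R ->
  ~~ inD k a b 0 2 -> Z.to_nat (Int_part (2 * kappa k * INR n)) < Defs.dist a b.
Proof.
move=> hk; rewrite /inD.
have h0 : (Int_part (0 * kappa k * INR n) <= 0)%Z.
  have [h1 _] := base_Int_part (0 * kappa k * INR n).
  apply: le_IZR; lra.
have -> : (Int_part (0 * kappa k * INR n) <=? Z.of_nat (Defs.dist a b))%Z = true.
  by apply/Z.leb_le; lia.
move=> /= /negP h; have : ~ (Z.of_nat (Defs.dist a b) <= Int_part (2 * kappa k * INR n))%Z.
  by move=> /Z.leb_le.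
have : (0 <= Int_part (2 * kappa k * INR n))%Z by apply: ip_nonneg; lra.
lia.
Qed.

Lemma k_facts k : 400 <= k ->
  (400 <= INR k)%R /\ (1 <= ln (INR k))%R /\ (10 * ln (INR k) <= INR k)%R.
Proof.
move=> hk.
have h400 : (400 <= INR k)%R by have := INR_leq hk; rewrite (INR_IZR_INZ 400) /=.
split => //.
have kpos : (0 < INR k)%R by lra.
split.
  have := exp_le_3; move=> h3.
  rewrite -(ln_exp 1); left; apply: ln_increasing; [apply: exp_pos | lra].
have h1 := exp_ineq1_le (INR k / 20).
have h2 : (exp (INR k / 10) = exp (INR k / 20) * exp (INR k / 20))%R.
  by rewrite -exp_plus; congr exp; field.
have h3 : (INR k < exp (INR k / 10))%R.
  rewrite h2; nra.
have := ln_increasing _ _ kpos h3; rewrite ln_exp; lra.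
Qed.

Lemma kappa_facts k n : 400 <= k ->
  (0 <= kappa k * INR n)%R /\ (10 * kappa k <= 1)%R /\ (0 <= kappa k)%R /\
  (INR k * kappa k = ln (INR k))%R.
Proof.
move=> hk; have [h400 [hL hLk]] := k_facts hk.
have kpos : (0 < INR k)%R by lra.
have e : (INR k * kappa k = ln (INR k))%R by rewrite /kappa; field; lra.
have k0 : (0 <= kappa k)%R.
  rewrite /kappa; apply: Rmult_le_pos; [lra | left; apply: Rinv_0_lt_compat; lra].
split; first by apply: Rmult_le_pos => //; apply: pos_INR.
split => //.
have : (INR k * (10 * kappa k) <= INR k * 1)%R by nra.
move=> h; nra.
Qed.

Lemma r_le_n k n : 400 <= k -> Z.to_nat (Int_part (10 * kappa k * INR n)) <= n.
Proof.
move=> hk; have [h0 [h10 _]] := kappa_facts n hk.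
have h := ip_le (x := 10 * kappa k * INR n) ltac:(lra).
have hn := pos_INR n.
apply/leP; apply: INR_le; nra.
Qed.

Lemma hnd_lemma k n : 400 <= k ->
  k * k * expn (n - (Z.to_nat (Int_part (2 * kappa k * INR n))).+1) k <= expn n k.
Proof.
move=> hk; have [h400 [hL hLk]] := k_facts hk.
have [h0 [h10 [hk0 e]]] := kappa_facts n hk.
set d := Z.to_nat (Int_part (2 * kappa k * INR n)).
have hd := ip_gt (x := 2 * kappa k * INR n) ltac:(lra).
rewrite -/d in hd.
have hn := pos_INR n.
have hy : (INR (n - d.+1) <= INR n * (1 - 2 * kappa k))%R.
  case: (leqP d.+1 n) => h.
    rewrite minus_INR; last by apply/leP.
    rewrite S_INR; nra.
  have -> : n - d.+1 = 0 by apply/eqP; rewrite subn_eq0 ltnW.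
  rewrite INR_0; nra.
have hpow : (INR (n - d.+1) ^ k <= (INR n * exp (-2 * kappa k)) ^ k)%R.
  apply: pow_incr; split; first exact: pos_INR.
  apply: Rle_trans hy _; apply: Rmult_le_compat_l => //.
  have := exp_ineq1_le (-2 * kappa k); lra.
rewrite Rpow_mult_distr exp_pow in hpow.
have he : (exp (INR k * (-2 * kappa k)) * (INR k * INR k) = 1)%R.
  have -> : (INR k * (-2 * kappa k) = - (ln (INR k) + ln (INR k)))%R by rewrite -e; ring.
  rewrite exp_Ropp exp_plus exp_ln; last lra.
  field; lra.
apply/leP; apply: INR_le.
rewrite !INR_muln !INR_expn.
have hp : (0 <= INR n ^ k)%R by apply: pow_le.
have kk : (0 <= INR k * INR k)%R by nra.
apply: Rle_trans (Rmult_le_compat_l _ _ _ kk hpow) _.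
have -> : (INR k * INR k * (INR n ^ k * exp (INR k * (-2 * kappa k))) = INR n ^ k)%R.
  by rewrite -[RHS]Rmult_1_r -he; ring.
lra.
Qed.

Lemma inT_inTb k n M (Phi : kcnf k n M) s : 0 < n -> inT Phi s -> inTb Phi s.
Proof.
move=> n0; rewrite /inT /inTb /rho => h.
have np : (0 < INR n)%R by apply: lt_0_INR; apply/ltP.
have p2 : (0 < 2 ^ k)%R by apply: pow_lt; lra.
have e : (INR n * ((/ 2) ^ k * INR M / INR n) / 10 = INR M / (10 * 2 ^ k))%R.
  rewrite pow_inv; field; lra.
rewrite e in h.
apply/leP; apply: INR_le.
rewrite !INR_muln INR_expn (INR_IZR_INZ 10) (INR_IZR_INZ 2) /=.
have : (INR (unsat Phi s) * (10 * 2 ^ k) <= INR M / (10 * 2 ^ k) * (10 * 2 ^ k))%R.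
  apply: Rmult_le_compat_r => //; lra.
have -> : (INR M / (10 * 2 ^ k) * (10 * 2 ^ k) = INR M)%R by field; lra.
lra.
Qed.

Lemma pow_le_exp1 (a : R) n : (0 <= a)%R -> (a <= exp 1)%R -> (a ^ n <= exp (INR n))%R.
Proof.
move=> a0 a1; apply: Rle_trans (pow_incr _ _ n (conj a0 a1)) _.
by rewrite exp_pow Rmult_1_r; right.
Qed.

Lemma two_le_e : (2 <= exp 1)%R.
Proof. have := exp_ineq1_le 1; lra. Qed.

Lemma kp1_bound k n r : 0 < k -> r <= n ->
  (INR k.+1 ^ n <= INR k ^ (n - r) * exp (INR n / INR k + INR r * ln (INR k)))%R.
Proof.
move=> k0 rn.
have kp : (0 < INR k)%R by apply: lt_0_INR; apply/ltP.
have e1 : (INR k.+1 = INR k * (1 + / INR k))%R by rewrite S_INR; field; lra.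
rewrite e1 Rpow_mult_distr.
have h1 : ((1 + / INR k) ^ n <= exp (INR n / INR k))%R.
  have : ((1 + / INR k) ^ n <= exp (/ INR k) ^ n)%R.
    apply: pow_incr; split; first by have := Rinv_0_lt_compat _ kp; lra.
    exact: exp_ineq1_le.
  by rewrite exp_pow.
have h2 : (INR k ^ n = INR k ^ (n - r) * exp (INR r * ln (INR k)))%R.
  rewrite -exp_pow exp_ln // -pow_add; congr pow; rewrite plusE; lia.
rewrite h2 exp_plus.
have p1 : (0 <= INR k ^ (n - r))%R by apply: pow_le; lra.
have p2 := exp_pos (INR r * ln (INR k)).
have p3 : (0 <= (1 + / INR k) ^ n)%R by apply: pow_le; have := Rinv_0_lt_compat _ kp; lra.
have := Rmult_le_compat_l _ _ _ (Rmult_le_pos _ _ p1 (Rlt_le _ _ p2)) h1.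
lra.
Qed.

Lemma INR2 : INR 2 = 2%R.
Proof. simpl; ring. Qed.
Lemma INR10 : INR 10 = 10%R.
Proof. simpl; ring. Qed.

Lemma exp_mono x y : (x <= y)%R -> (exp x <= exp y)%R.
Proof. by case=> [h|->]; [left; apply: exp_increasing | right]. Qed.

Lemma final_bound k n M r Zq (E0 B : nat) :
  400 <= k -> 0 < n ->
  (195 * 2 ^ k * (ln (INR k)) ^ 2 / INR k <= INR M / INR n)%R ->
  (INR r <= 10 * kappa k * INR n)%R -> r <= n ->
  Zq * (10 * expn 2 k) <= k.+1 * M ->
  (INR E0 <= 2 * INR k * (2 ^ k * INR n ^ k) * (1 - INR k.+1 / 2 ^ (k + 2)))%R ->
  B * (expn 2 M * expn k M) * expn k ((n - r) * k.+1) <=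
    expn 2 Zq * expn E0 M * (expn 2 n * expn k.+1 (n * k.+1)) ->
  (INR B <= exp (- INR n) * (2 ^ k * INR n ^ k) ^ M)%R.
Proof.
move=> hk n0 hM hr rn hZ hE hB.
have [h400 [hL hLk]] := k_facts hk.
have [h0 [h10 [hk0 eL]]] := kappa_facts n hk.
have k0 : 0 < k by apply: leq_trans hk.
move/INR_leq: hB; rewrite !INR_muln !INR_expn -!multE !pow_mult INR2 => hB.
move/INR_leq: hZ; rewrite !INR_muln !INR_expn INR2 INR10 => hZ.
set kk := INR k in hB hZ hE hM hr h400 hL hLk h0 h10 hk0 eL *.
set L := ln kk in hM hL hLk eL *.
set nn := INR n in hB hE hM hr h0 *.
have kp : (0 < kk)%R by lra.
have np : (0 < nn)%R by apply: lt_0_INR; apply/ltP.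
have eK : INR k.+1 = (kk + 1)%R by rewrite S_INR.
rewrite eK in hB hZ hE.
have p2 : (0 < 2 ^ k)%R by apply: pow_lt; lra.
set a := ((kk + 1) / 2 ^ (k + 2))%R in hE.
have ea : (a = (kk + 1) / (4 * 2 ^ k))%R.
  by rewrite /a pow_add /= ; field; lra.
have a1 : (a <= 1)%R.
  have h := INR_leq (ltn_expl (k + 2) (isT : 1 < 2)).
  rewrite INR_expn INR2 in h.
  rewrite /a; apply: (Rmult_le_reg_r (2 ^ (k + 2))); first by apply: pow_lt; lra.
  have -> : (kk + 1)%R = INR k.+1 by rewrite eK.
  rewrite Rmult_1_l /Rdiv Rmult_assoc Rinv_l; last by apply: pow_nonzero; lra.
  have : (INR k.+1 <= INR (k + 2))%R by apply: INR_leq; rewrite addn2.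
  rewrite S_INR in h; lra.
set Cr := (2 ^ k * nn ^ k)%R in hE *.
have b3 : (2 ^ Zq <= exp (INR Zq))%R by apply: pow_le_exp1; [lra | exact: two_le_e].
have b4 : (2 ^ n <= exp nn)%R by apply: pow_le_exp1; [lra | exact: two_le_e].
have b1 : (INR E0 ^ M <= 2 ^ M * kk ^ M * Cr ^ M * exp (- (a * INR M)))%R.
  apply: Rle_trans (pow_incr _ _ M (conj (pos_INR E0) hE)) _.
  rewrite !Rpow_mult_distr.
  have : ((1 - a) ^ M <= exp (- a) ^ M)%R.
    apply: pow_incr; split; first lra.
    have := exp_ineq1_le (- a); lra.
  rewrite exp_pow.
  have -> : (INR M * - a = - (a * INR M))%R by ring.
  have q : (0 <= 2 ^ M * kk ^ M * Cr ^ M)%R.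
    apply: Rmult_le_pos; [apply: Rmult_le_pos|]; apply: pow_le; rewrite /Cr; try lra.
    apply: Rmult_le_pos; apply: pow_le; lra.
  move=> h; have := Rmult_le_compat_l _ _ _ q h.
  rewrite /Cr !Rpow_mult_distr; lra.
have b2 : (((kk + 1) ^ n) ^ k.+1 <=
    (kk ^ (n - r)) ^ k.+1 * exp ((kk + 1) * (nn / kk + INR r * L)))%R.
  have h := kp1_bound k0 rn; rewrite eK in h.
  have h' := pow_incr _ _ k.+1 (conj (pow_le (kk + 1) n ltac:(lra)) h).
  by rewrite Rpow_mult_distr exp_pow eK in h'.
set T := ((kk + 1) * (nn / kk + INR r * L))%R in b2.
set P := (2 ^ M * kk ^ M * (kk ^ (n - r)) ^ k.+1)%R.
have Pp : (0 < P)%R.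
  rewrite /P; repeat apply: Rmult_lt_0_compat; apply: pow_lt => //; try lra.
  by apply: pow_lt.
have main : (INR B * P <= P * Cr ^ M * exp (INR Zq - a * INR M + nn + T))%R.
  have e : (INR B * P = INR B * (2 ^ M * kk ^ M) * (kk ^ (n - r)) ^ k.+1)%R by rewrite /P; ring.
  rewrite e; apply: Rle_trans hB _.
  have n1 : (0 <= 2 ^ Zq)%R by apply: pow_le; lra.
  have n2 : (0 <= INR E0 ^ M)%R by apply: pow_le; apply: pos_INR.
  have n3 : (0 <= 2 ^ n)%R by apply: pow_le; lra.
  have n4 : (0 <= ((kk + 1) ^ n) ^ k.+1)%R by apply: pow_le; apply: pow_le; lra.
  apply: Rle_trans (Rmult_le_compat _ _ _ _ (Rmult_le_pos _ _ n1 n2)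
     (Rmult_le_pos _ _ n3 n4) (Rmult_le_compat _ _ _ _ n1 n2 b3 b1)
     (Rmult_le_compat _ _ _ _ n3 n4 b4 b2)) _.
  right; rewrite !exp_plus /P; ring.
have hS : (INR Zq - a * INR M + nn + T <= - nn)%R.
  set A := ((kk + 1) * INR M / 2 ^ k)%R.
  set W := ((kk + 1) * nn / kk)%R.
  set LW := (L ^ 2 * W)%R.
  have F1 : (INR Zq <= A / 10)%R.
    apply: (Rmult_le_reg_r (10 * 2 ^ k)); first lra.
    have -> : (A / 10 * (10 * 2 ^ k) = (kk + 1) * INR M)%R by rewrite /A; field; lra.
    exact: hZ.
  have F2 : (a * INR M = A / 4)%R by rewrite ea /A; field; lra.
  have F3 : (195 * LW <= A)%R.
    have q : (0 <= nn * (kk + 1) / 2 ^ k)%R.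
      apply: Rmult_le_pos; [nra | left; apply: Rinv_0_lt_compat; lra].
    have h := Rmult_le_compat_r _ _ _ q hM.
    have e1 : (195 * 2 ^ k * L ^ 2 / kk * (nn * (kk + 1) / 2 ^ k) = 195 * LW)%R.
      by rewrite /LW /W; field; lra.
    have e2 : (INR M / nn * (nn * (kk + 1) / 2 ^ k) = A)%R by rewrite /A; field; lra.
    lra.
  have F4 : ((kk + 1) * (INR r * L) <= 10 * LW)%R.
    have q : (0 <= (kk + 1) * L)%R by nra.
    have h := Rmult_le_compat_r _ _ _ q hr.
    have e1 : (10 * kappa k * nn * ((kk + 1) * L) = 10 * LW)%R.
      rewrite /LW /W -eL; field; lra.
    have e2 : (INR r * ((kk + 1) * L) = (kk + 1) * (INR r * L))%R by ring.
    lra.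
  have F5 : ((kk + 1) * (nn / kk) = W)%R by rewrite /W; field; lra.
  have F6 : (nn <= W)%R.
    rewrite /W; apply: (Rmult_le_reg_r kk) => //.
    have -> : ((kk + 1) * nn / kk * kk = (kk + 1) * nn)%R by field; lra.
    nra.
  have F7 : (W <= LW)%R.
    rewrite /LW; have : (1 <= L ^ 2)%R by nra.
    have : (0 <= W)%R by lra.
    nra.
  have eT : (T = (kk + 1) * (nn / kk) + (kk + 1) * (INR r * L))%R by rewrite /T; ring.
  lra.
have fin : (INR B * P <= exp (- nn) * Cr ^ M * P)%R.
  apply: Rle_trans main _.
  have := exp_mono hS.
  have : (0 <= P * Cr ^ M)%R by apply: Rmult_le_pos; [lra | apply: pow_le; rewrite /Cr;
    apply: Rmult_le_pos; apply: pow_le; lra].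
  nra.
by apply: Rmult_le_reg_r fin.
Qed.

Lemma card_C k n : #|{ffun 'I_k -> literal n}| = expn (n * 2) k.
Proof. by rewrite card_ffun card_prod card_ord card_bool card_ord. Qed.

Lemma E0_bound k n : 2 <= k ->
  (INR (2 * k * #|{ffun 'I_k -> literal n}| - k.+1 * (k - 1) * expn n k) <=
   2 * INR k * (2 ^ k * INR n ^ k) * (1 - INR k.+1 / 2 ^ (k + 2)))%R.
Proof.
move=> k2.
have kk2 : (2 <= INR k)%R by have := INR_leq k2; rewrite INR2.
have p2 : (0 < 2 ^ k)%R by apply: pow_lt; lra.
have pn : (0 <= INR n ^ k)%R by apply: pow_le; apply: pos_INR.
have e4 : (2 ^ (k + 2) = 2 ^ k * 4)%R by rewrite pow_add /=; ring.
have hR : (2 * INR k * (2 ^ k * INR n ^ k) * (1 - INR k.+1 / 2 ^ (k + 2)) =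
    2 * INR k * 2 ^ k * INR n ^ k - INR k * (INR k + 1) * INR n ^ k / 2)%R.
  rewrite e4 S_INR; field; lra.
rewrite hR.
case: (leqP (k.+1 * (k - 1) * expn n k) (2 * k * #|{ffun 'I_k -> literal n}|)) => h.
  rewrite minus_INR; last by apply/leP.
  rewrite !INR_muln card_C !INR_expn INR_muln INR2 minus_INR; last by apply/leP; lia.
  rewrite S_INR Rpow_mult_distr INR_1.
  have : (INR k * (INR k + 1) / 2 <= (INR k + 1) * (INR k - 1))%R by nra.
  move=> h'; have := Rmult_le_compat_r _ _ _ pn h'.
  lra.
have -> : 2 * k * #|{ffun 'I_k -> literal n}| - k.+1 * (k - 1) * expn n k = 0.
  by apply/eqP; rewrite subn_eq0 ltnW.
rewrite INR_0.
have : (INR k * (INR k + 1) * INR n ^ k / 2 <= 2 * INR k * 2 ^ k * INR n ^ k)%R.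
  have hk1 : (INR k + 1 <= 2 ^ (k + 2))%R.
    have := INR_leq (ltn_expl (k + 2) (isT : 1 < 2)).
    rewrite INR_expn INR2 S_INR plus_INR INR2; lra.
  rewrite e4 in hk1.
  have : (0 <= INR k * INR n ^ k)%R by nra.
  nra.
lra.
Qed.

Theorem mainTheorem9 :
  exists k0 : nat, forall k : nat, (k0 <= k)%nat ->
  forall m : nat -> nat,
    (forall n : nat, (0 < n)%nat ->
       (195 * 2 ^ k * (ln (INR k)) ^ 2 / INR k <= INR (m n) / INR n)%R) ->
  forall eps : R, (0 < eps)%R ->
  exists N : nat, forall n : nat, (N <= n)%nat ->
    exists B : {set kcnf k n (m n)},
      (INR #|B| <= eps * INR #|{: kcnf k n (m n)}|)%R /\
      forall Phi : kcnf k n (m n), Phi \notin B ->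
        forall s : seq (assignment n), greedy_mist_run Phi s ->
        forall tau : assignment n,
          (#|[set mu : assignment n | (mu \in s) && inD k tau mu 0 10]| <= k)%nat.
Proof.
exists 400 => k hk m hm eps heps.
have [N [hN N0]] := archimed_cor1 eps heps.
exists N => n hn.
have n0 : 0 < n by apply: leq_trans hn; apply/ltP.
have [h0 [h10 [hk0 eL]]] := kappa_facts n hk.
set M := m n.
set r := Z.to_nat (Int_part (10 * kappa k * INR n)).
set d := Z.to_nat (Int_part (2 * kappa k * INR n)).
exists (Bset k n M r d); split; last first.
  move=> Phi nB s run tau.
  apply: (@not_B k n M r d Phi s tau) => //.
  - by move=> mu; apply: inT_inTb.
  - by move=> a b; apply: inD10.
  - by move=> a b; apply: inD2.
have k0 : 0 < k by apply: leq_trans hk.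
have hB := nat_main M r k0 (hnd_lemma n hk).
have hf := final_bound hk n0 (hm n n0) (ip_le (x := 10 * kappa k * INR n) ltac:(lra))
   (r_le_n n hk) (leq_divM (k.+1 * M) (10 * expn 2 k)) (E0_bound n (leq_trans (isT : 2 <= 400) hk)) hB.
have hcard : INR #|{: kcnf k n M}| = ((2 ^ k * INR n ^ k) ^ M)%R.
  rewrite card_ffun card_ord card_C !INR_expn INR_muln INR2 Rpow_mult_distr; congr pow; ring.
rewrite hcard.
apply: Rle_trans hf _.
apply: Rmult_le_compat_r; first by apply: pow_le; apply: Rmult_le_pos; apply: pow_le; try lra; apply: pos_INR.
have np : (0 < INR n)%R by apply: lt_0_INR; apply/ltP.
have Np : (0 < INR N)%R by apply: lt_0_INR.
have hNn : (INR N <= INR n)%R by apply: INR_leq.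
have he : (INR n < exp (INR n))%R by have := exp_ineq1_le (INR n); lra.
rewrite exp_Ropp.
apply: Rle_trans (Rlt_le _ _ hN).
apply: Rle_trans (Rlt_le _ _ (Rinv_lt_contravar _ _ _ he)) _; first by apply: Rmult_lt_0_compat => //; apply: exp_pos.
apply: Rinv_le_contravar => //.
Qed.
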